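(* Let $\mathbb{F}$ be a finite field with $q=p^k\geq 4$ elements ($p$ prime), and let $\Gamma$ be a connected finite graph with vertex set $V$ and edge set $E$, each edge $e$ being oriented with initial vertex $e(0)$ and terminal vertex $e(1)$. Assume $|V|\leq |E|$. Then $\Gamma$ is $\mathbb{F}$-colorable if and only if $A_\Gamma\in \mathbf{C}$, i.e. if and only if there exists a map $\alpha:E\to \mathbb{F}\setminus\{0,-1\}$ such that the $|V|\times|E|$ matrix $\pi_\alpha(A_\Gamma)=[A_\Gamma(v,e,\alpha(e))]_{v\in V,e\in E}$ has rank less than $\min(|E|,|V|)$.
   Context: An $\mathbb{F}$-coloring of $\Gamma$ is a map $V\to\mathbb{F}^{*}=\mathbb{F}\setminus\{0\}$ such that no two adjacent vertices receive the same value; $\Gamma$ is $\mathbb{F}$-colorable if it has one. The array $A_\Gamma\in\mathbb{F}^{|V|\cdot|E|\cdot(q-1)}$ is indexed by $(v,e,c)$ with $v\in V$, $e\in E$, $c\in\mathbb{F}\setminus\{0\}$, and defined by $A_\Gamma(v,e,c)=1$ if $v=e(0)$, $A_\Gamma(v,e,c)=c$ if $v=e(1)$, and $A_\Gamma(v,e,c)=0$ otherwise. For $\alpha:E\to\mathbb{F}\setminus\{0,-1\}$, $\pi_\alpha$ sends an array $A$ indexed by $(v,e,c)$ to the $|V|\times|E|$ matrix $[A(v,e,\alpha(e))]_{v,e}$. Let $\mathbf{D}$ be the determinantal variety of $|V|\times|E|$ matrices of rank $<\min(|E|,|V|)$, $\mathbf{D}_\alpha=\pi_\alpha^{*}\mathbf{D}$,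 and the coloring variety $\mathbf{C}=\bigcup_\alpha \mathbf{D}_\alpha\subset\mathbb{A}^{|V||E|(q-1)}$, the union over all $\alpha:E\to\mathbb{F}\setminus\{0,-1\}$. *)

(* Defs.v *)
From HB Require Import structures.
From mathcomp Require Import all_boot all_order all_algebra all_field.
Set Implicit Arguments. Unset Strict Implicit. Unset Printing Implicit Defensive.
Import GRing.Theory.
Local Open Scope ring_scope.

(* An oriented finite (multi)graph: vertex type V, edge type E,
   each edge e has initial vertex src e = e(0) and terminal vertex tgt e = e(1). *)

Definition adjacent (V E : finType) (src tgt : E -> V) : rel V :=
  fun u v => [exists e, ((src e == u) && (tgt e == v)) || ((src e == v) && (tgt e == u))].

Definition connected_graph (V E : finType) (src tgt : E -> V) : Prop :=
  (0 < #|V|)%N /\ forall u v : V, connect (adjacent src tgt) u v.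

Definition F_coloring (F : fieldType) (V E : finType) (src tgt : E -> V)
  (f : V -> F) : Prop :=
  (forall v, f v != 0) /\ (forall u v, adjacent src tgt u v -> f u != f v).

Definition F_colorable (F : fieldType) (V E : finType) (src tgt : E -> V) : Prop :=
  exists f : V -> F, F_coloring src tgt f.

(* Arrays indexed by (v, e, c), c in F \ {0}; we represent them as functions
   V -> E -> F -> F (only values at c <> 0 are ever used). *)
Definition array (F : fieldType) (V E : finType) := V -> E -> F -> F.

Definition A_Gamma (F : fieldType) (V E : finType) (src tgt : E -> V) : array F V E :=
  fun v e c => if v == src e then 1 else if v == tgt e then c else 0.

Definition admissible (F : fieldType) (E : finType) (alpha : E -> F) : Prop :=
  forall e, alpha e != 0 /\ alpha e != -1.

Definition pi_alpha (F : fieldType) (V E : finType) (alpha : E -> F)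
  (A : array F V E) : 'M[F]_(#|V|, #|E|) :=
  \matrix_(i < #|V|, j < #|E|) A (enum_val i) (enum_val j) (alpha (enum_val j)).

Definition in_D (F : fieldType) (m n : nat) (M : 'M[F]_(m, n)) : Prop :=
  (\rank M < minn n m)%N.

Definition in_D_alpha (F : fieldType) (V E : finType) (alpha : E -> F)
  (A : array F V E) : Prop := in_D (pi_alpha alpha A).

Definition in_coloring_variety (F : fieldType) (V E : finType)
  (A : array F V E) : Prop :=
  exists alpha : E -> F, admissible alpha /\ in_D_alpha alpha A.

(* Main.v *)
Require Import Defs.
From mathcomp Require Import all_boot all_order all_algebra all_field.
Import GRing.Theory.
Local Open Scope ring_scope.

Lemma entry_lemma (F : fieldType) (V E : finType) (src tgt : E -> V)
  (alpha : E -> F) (y : 'rV[F]_#|V|) (j : 'I_#|E|) :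
  src (enum_val j) != tgt (enum_val j) ->
  (y *m pi_alpha alpha (A_Gamma src tgt)) 0 j =
  y 0 (enum_rank (src (enum_val j))) +
  alpha (enum_val j) * y 0 (enum_rank (tgt (enum_val j))).
Proof.
set e := enum_val j => ne.
rewrite !mxE (bigD1 (enum_rank (src e))) //= (bigD1 (enum_rank (tgt e))) /=; last first.
  by apply/eqP => /(congr1 enum_val); rewrite !enum_rankK => h; rewrite h eqxx in ne.
rewrite big1 ?addr0.
  rewrite !mxE !enum_rankK /A_Gamma eqxx mulr1 eq_sym (negbTE ne) eqxx mulrC //.
move=> i /andP[h1 h2]; rewrite !mxE /A_Gamma.
have -> : (enum_val i == src e) = false.
  by apply/negbTE; apply: contra h1 => /eqP <-; rewrite enum_valK.
have -> : (enum_val i == tgt e) = false.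
  by apply/negbTE; apply: contra h2 => /eqP <-; rewrite enum_valK.
by rewrite mulr0.
Qed.

Theorem mainTheorem1 (F : finFieldType) (V E : finType) (src tgt : E -> V) :
  (4 <= #|F|)%N ->
  (forall e, src e != tgt e) ->
  connected_graph src tgt ->
  (#|V| <= #|E|)%N ->
  (@F_colorable F V E src tgt <-> in_coloring_variety (@A_Gamma F V E src tgt)).
Proof.
move=> _ hne [V0 conn] hVE.
have hmin : minn #|E| #|V| = #|V| by apply/minn_idPr.
have rk : forall alpha : E -> F,
   in_D_alpha alpha (A_Gamma src tgt) <-> ~~ row_free (pi_alpha alpha (A_Gamma src tgt)).
  move=> alpha; rewrite /in_D_alpha /in_D hmin /row_free ltn_neqAle rank_leq_row andbT.
  by [].
split.
- case=> f [fnz fadj].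
  exists (fun e => - (f (src e) / f (tgt e))); split.
    move=> e; split.
      by rewrite oppr_eq0 mulf_neq0 ?invr_eq0 ?fnz.
    rewrite eqr_opp; apply/negP => /eqP h.
    have : f (src e) = f (tgt e).
      by rewrite -(divfK (fnz (tgt e)) (f (src e))) h mul1r.
    apply/eqP; apply: fadj; apply/existsP; exists e; by rewrite !eqxx.
  apply/rk/negP => rf.
  have y0 : (\row_i f (enum_val i)) *m pi_alpha (fun e => - (f (src e) / f (tgt e))) (A_Gamma src tgt) = 0 *m pi_alpha (fun e => - (f (src e) / f (tgt e))) (A_Gamma src tgt).
    rewrite mul0mx; apply/rowP => j; rewrite entry_lemma ?hne // !mxE !enum_rankK.
    by rewrite mulNr -mulrA mulVf ?fnz // mulr1 subrr.
  move/(row_free_inj rf): y0 => /rowP.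
  case/card_gt0P: V0 => v0 _ /(_ (enum_rank v0)).
  rewrite !mxE enum_rankK => /eqP; by rewrite (negbTE (fnz v0)).
- case=> alpha [adm /rk nrf].
  have : exists y : 'rV[F]_#|V|, y != 0 /\ y *m pi_alpha alpha (A_Gamma src tgt) = 0.
    move: nrf; rewrite -kermx_eq0 => kn.
    have [i hi] : exists i, row i (kermx (pi_alpha alpha (A_Gamma src tgt))) != 0.
      apply/existsP; apply: contraR kn => /existsPn h; apply/eqP/row_matrixP => i.
      by rewrite row0; apply/eqP; move: (h i); rewrite negbK.
    by exists (row i (kermx (pi_alpha alpha (A_Gamma src tgt)))); rewrite -row_mul mulmx_ker row0.
  case=> y [ynz yM].
  pose x : V -> F := fun v => y 0 (enum_rank v).
  have edge e : x (src e) + alpha e * x (tgt e) = 0.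
    have := yM; move/rowP/(_ (enum_rank e)).
    by rewrite entry_lemma enum_rankK ?hne // mxE.
  have edge0 e : (x (src e) != 0) = (x (tgt e) != 0).
    have := edge e; move/eqP; rewrite addr_eq0 => /eqP ->.
    by rewrite oppr_eq0 mulf_eq0 (negbTE (adm e).1).
  have cl : closed (adjacent src tgt) [pred v | x v != 0].
    move=> u v /existsP[e /orP[/andP[/eqP<- /eqP<-]|/andP[/eqP<- /eqP<-]]].
      exact: (edge0 e).
    exact: (esym (edge0 e)).
  have [v0 hv0] : exists v0, x v0 != 0.
    apply/existsP; apply: contraR ynz => /existsPn h; apply/eqP/rowP => i.
    by move: (h (enum_val i)); rewrite negbK /x enum_valK mxE => /eqP.
  have xnz v : x v != 0.
    by have := closed_connect cl (conn v0 v); rewrite !inE hv0 => <-.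
  exists x; split => // u v /existsP[e /orP[/andP[/eqP<- /eqP<-]|/andP[/eqP<- /eqP<-]]].
    all: apply/negP => /eqP h; have := edge e; rewrite h -[X in X + _]mul1r -mulrDl.
    all: move/eqP; rewrite mulf_eq0 (negbTE (xnz _)) orbF addr_eq0 eq_sym eqr_oppLR.
    all: by rewrite (negbTE (adm e).2).
Qed.
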